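(* There exists a positive constant $C$ such that for all integers $n, m, k, r$ with $2 \leq k \leq m \leq n$ and $r \geq 2$, \[ \binom{n}{m} \binom{m-1}{k-1} \frac{m!}{\Gamma(m/k)^k} \left(\frac{m}{kn}\right)^{mr} \leq C \cdot \min\{m^k, 2^m\} \cdot \left(\frac{1.2}{k^{r-1}}\right)^m . \]
   Context: $\Gamma$ denotes the Gamma function. *)

(* Defs.v *)
From Stdlib Require Import Reals.
From Coquelicot Require Import Coquelicot.

Open Scope R_scope.

Definition Gamma (x : R) : R :=
  RInt_gen (fun t => Rpower t (x - 1) * exp (- t))
           (at_right 0) (Rbar_locally p_infty).

(* Main.v *)
Require Import Defs.
From Stdlib Require Import Reals Factorial Arith Lra Lia Psatz.
From Coquelicot Require Import Coquelicot.
Open Scope R_scope.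
From Stdlib Require Import Classical.
Ltac sd := repeat split; try (intro; nra); try nra.

Lemma cont_d (f : R -> R) x : ex_derive f x -> continuous f x.
Proof. intros H. exact (ex_derive_continuous f x H). Qed.

Lemma mono_deriv (f df : R -> R) (a b : R) : a <= b ->
  (forall t, a <= t <= b -> is_derive f t (df t)) ->
  (forall t, a <= t <= b -> continuous df t) ->
  (forall t, a < t < b -> 0 <= df t) -> f a <= f b.
Proof.
  intros Hab Hd Hc Hp.
  assert (H := is_RInt_derive f df a b).
  rewrite Rmin_left in H by lra. rewrite Rmax_right in H by lra.
  specialize (H Hd Hc).
  assert (H2 := is_RInt_ge_0 df a b _ Hab H Hp).
  unfold minus, plus, opp in H2; simpl in H2. lra.
Qed.

Lemma ln_lb4 (t : R) : 0 <= t -> t - t^2/2 + t^3/3 - t^4/4 <= ln (1+t).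
Proof.
  intros Ht.
  assert (H := mono_deriv (fun t => ln (1+t) - (t - t^2/2 + t^3/3 - t^4/4))
     (fun t => t^4/(1+t)) 0 t Ht).
  cbv beta in H. rewrite Rplus_0_r, ln_1 in H.
  assert (0 <= ln (1 + t) - (t - t ^ 2 / 2 + t ^ 3 / 3 - t ^ 4 / 4)); [|lra].
  eapply Rle_trans; [|apply H]. 
  - right; field.
  - intros u Hu. auto_derive. lra. field. lra.
  - intros u Hu. apply cont_d. auto_derive. lra.
  - intros u Hu. apply Rmult_le_pos. apply pow_le; lra. apply Rlt_le, Rinv_0_lt_compat; lra.
Qed.
Lemma ln_ub_ge1 (z : R) : 1 <= z -> ln z <= (z - /z)/2.
Proof.
  intros Hz.
  assert (H := mono_deriv (fun z => (z - /z)/2 - ln z)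
     (fun z => (z-1)^2/(2*z^2)) 1 z Hz).
  cbv beta in H. rewrite ln_1 in H.
  assert (0 <= (z - / z) / 2 - ln z); [|lra].
  eapply Rle_trans; [|apply H].
  - right; field.
  - intros u Hu. auto_derive. sd. field. sd.
  - intros u Hu. apply cont_d. auto_derive. sd.
  - intros u Hu. apply Rmult_le_pos. apply pow2_ge_0. apply Rlt_le, Rinv_0_lt_compat.
    apply Rmult_lt_0_compat. lra. apply pow_lt; lra.
Qed.

Lemma ln_ub_le1 (z : R) : 0 < z <= 1 -> ln z <= 2*(z-1)/(z+1).
Proof.
  intros Hz.
  assert (H := mono_deriv (fun z => ln z - 2*(z-1)/(z+1))
     (fun z => (z-1)^2/(z*(z+1)^2)) z 1 (proj2 Hz)).
  cbv beta in H. rewrite ln_1 in H.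
  assert (ln z - 2*(z-1)/(z+1) <= 0); [|lra].
  eapply Rle_trans; [apply H|].
  - intros u Hu. auto_derive. sd. field. sd.
  - intros u Hu. apply cont_d. auto_derive. sd.
  - intros u Hu. apply Rmult_le_pos. apply pow2_ge_0. apply Rlt_le, Rinv_0_lt_compat.
    apply Rmult_lt_0_compat. lra. apply pow_lt; lra.
  - right; field.
Qed.

Lemma ln_atanh (y : R) : 0 <= y < 1 ->
  ln (1+y) - ln (1-y) <= 2*y + 2/3 * y^3/(1-y^2).
Proof.
  intros Hy.
  assert (H := mono_deriv (fun y => 2*y + 2/3 * y^3/(1-y^2) - (ln (1+y) - ln (1-y)))
     (fun y => 4/3 * y^4/(1-y^2)^2) 0 y (proj1 Hy)).
  cbv beta in H. rewrite Rplus_0_r, Rminus_0_r, ln_1 in H.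
  assert (0 <= 2*y + 2/3 * y^3/(1-y^2) - (ln (1+y) - ln (1-y))); [|lra].
  eapply Rle_trans; [|apply H].
  - right; field.
  - intros u Hu. assert (0 < 1 - u*u) by nra. auto_derive. sd. field. sd.
  - intros u Hu. assert (0 < 1 - u*u) by nra. apply cont_d. auto_derive. sd.
  - intros u Hu. apply Rmult_le_pos. apply Rmult_le_pos. lra. apply pow_le; lra.
    apply Rlt_le, Rinv_0_lt_compat. apply pow_lt; nra.
Qed.

Lemma ln_lb_frac (z : R) : 0 <= z -> z/(1+z) <= ln (1+z).
Proof.
  intros Hz.
  assert (H := mono_deriv (fun z => ln (1+z) - z/(1+z))
     (fun z => z/(1+z)^2) 0 z Hz).
  cbv beta in H. rewrite Rplus_0_r, ln_1 in H.
  assert (0 <= ln (1+z) - z/(1+z)); [|lra].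
  eapply Rle_trans; [|apply H].
  - right; field.
  - intros u Hu. auto_derive. sd. field. sd.
  - intros u Hu. apply cont_d. auto_derive. sd.
  - intros u Hu. apply Rmult_le_pos. lra. apply Rlt_le, Rinv_0_lt_compat. apply pow_lt; lra.
Qed.

Lemma exp_taylor5 (y : R) : 0 <= y ->
  1 + y + y^2/2 + y^3/6 + y^4/24 + y^5/120 <= exp y.
Proof.
  intros Hy. eapply Rle_trans; [|apply (exp_ge_taylor y 5 Hy)].
  right. simpl. field.
Qed.

Lemma ln2_ub : ln 2 <= 0.6935.
Proof.
  rewrite <- (ln_exp 0.6935). apply ln_le. lra.
  eapply Rle_trans; [|apply exp_taylor5; lra]. lra.
Qed.

Lemma ln12_lb : 0.182 <= ln (6/5).
Proof.
  replace (6/5) with (1 + 1/5) by field.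
  eapply Rle_trans; [|apply ln_lb4; lra]. lra.
Qed.
Lemma nln1 (w : R) : 0 < w <= 1 -> - ln w <= (/w - w)/2.
Proof.
  intros Hw. rewrite <- ln_Rinv by lra.
  eapply Rle_trans; [apply ln_ub_ge1|].
  - rewrite <- Rinv_1. apply Rinv_le_contravar; lra.
  - rewrite Rinv_inv. lra.
Qed.

Lemma nln2 (w : R) : 1 <= w -> - ln w <= 2*(1-w)/(1+w).
Proof.
  intros Hw. rewrite <- ln_Rinv by lra.
  assert (0 < /w <= 1). { split. apply Rinv_0_lt_compat; lra.
     rewrite <- Rinv_1. apply Rinv_le_contravar; lra. }
  eapply Rle_trans; [apply ln_ub_le1; auto|].
  right. field. lra.
Qed.

Lemma ln_le_xm1 (z : R) : 0 < z -> ln z <= z - 1.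
Proof.
  intros Hz. destruct (Rle_or_lt 1 z).
  - eapply Rle_trans; [apply ln_ub_ge1; auto|].
    assert (/z <= 1). rewrite <- Rinv_1. apply Rinv_le_contravar; lra.
    assert (0 < /z) by (apply Rinv_0_lt_compat; lra).
    assert (z * /z = 1) by (field; lra). nra.
  - eapply Rle_trans; [apply ln_ub_le1; lra|].
    apply Rmult_le_reg_r with (z+1). lra.
    unfold Rdiv. rewrite Rmult_assoc, Rinv_l by lra. nra.
Qed.

Lemma p1 t : 0 < t -> t <= 1/4 -> (t-1)*(t - t^2/2 + t^3/3 - t^4/4) + t * (2*0.6935) + 1/8 - 2*t^2 <= 0.181.
Proof. intros. 
 assert (0 <= t^3) by (apply pow_le; lra).
 assert (0 <= t^4) by (apply pow_le; lra).
 assert (0 <= t^5) by (apply pow_le; lra).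
 assert (t^4 <= t^3/4) by (replace (t^4) with (t^3*t) by ring; nra).
 assert (0 <= (1/4 - t)*(1/4-t)) by nra.
 assert (0 <= (1/4 - t)*(1/4-t)*t) by nra.
 assert (0 <= (1/4 - t)*t*t) by nra.
 nra. Qed.
Lemma p2 t q : 1/4 <= t -> t <= 1/2 -> q * (1+4*t) = 2*t*(1-4*t) -> (t-1)*(t - t^2/2 + t^3/3 - t^4/4) + t * (2*0.6935) + q <= 0.181.
Proof. intros.
 assert (0 <= t^3) by (apply pow_le; lra).
 assert (0 <= t^4) by (apply pow_le; lra).
 assert (q <= 0) by nra.
 assert (0 <= (t - 1/4)*(t-1/4)) by nra.
 assert (0 <= (1/2 - t)*(t-1/4)) by nra.
 assert (0 <= (t - 1/4)*(t-1/4)*t) by nra.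
 assert (0 <= (1/2 - t)*t*t) by nra.
 nra. Qed.
Lemma p3 t q : 1/2 <= t -> t <= 1 -> q * (1+2*t) = 2*t*(1-2*t) -> (t-1)*(t - t^2/2 + t^3/3 - t^4/4) + t * 0.6935 + q <= 0.181.
Proof. intros.
 assert (0 <= t^3) by (apply pow_le; lra).
 assert (0 <= t^4) by (apply pow_le; lra).
 assert (q <= 0) by nra.
 assert (0 <= (t - 1/2)*(1-t)) by nra.
 assert (0 <= (1 - t)*t*t) by nra.
 nra. Qed.

Lemma g_bound (t : R) : 0 < t -> (t-1)*ln(1+t) - t*ln t <= 0.181.
Proof.
  intros Ht. assert (Hl2 := ln2_ub).
  destruct (Rle_or_lt 1 t) as [H1|H1].
  - assert (E : ln (1+t) = ln t + ln (1 + /t)).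
    { rewrite <- ln_mult by (try apply Rplus_lt_0_compat; try apply Rinv_0_lt_compat; lra).
      f_equal. field. lra. }
    assert (0 < /t) by (apply Rinv_0_lt_compat; lra).
    assert (ln (1 + /t) <= /t) by (eapply Rle_trans; [apply ln_le_xm1|]; lra).
    assert (ln t >= (t-1)/t).
    { assert (H' := ln_lb_frac (t-1) ltac:(lra)).
      replace (1 + (t-1)) with t in H' by ring. lra. }
    assert (t * /t = 1) by (field; lra).
    rewrite E. unfold Rdiv in *. nra.
  - assert (HL := ln_lb4 t (Rlt_le _ _ Ht)).
    assert (A : (t-1)*ln(1+t) <= (t-1)*(t - t^2/2 + t^3/3 - t^4/4)) by nra.
    assert (E4 : ln t = ln (4*t) - 2 * ln 2).
    { rewrite ln_mult by lra. replace 4 with (2*2) by ring. rewrite ln_mult by lra. ring. }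
    assert (E2 : ln t = ln (2*t) - ln 2).
    { rewrite ln_mult by lra. ring. }
    destruct (Rle_or_lt t (1/4)) as [H2|H2].
    + assert (B := nln1 (4*t) ltac:(lra)).
      assert (C : - t * ln t <= t * (2*0.6935) + 1/8 - 2*t^2).
      { rewrite E4. replace (/(4*t)) with (1/4 * /t) in B by (field; lra).
        assert (t * /t = 1) by (field; lra). nra. }
      assert (P := p1 t Ht H2). lra.
    + destruct (Rle_or_lt t (1/2)) as [H3|H3].
      * assert (B := nln2 (4*t) ltac:(lra)).
        assert (C : - t * ln t <= t * (2*0.6935) + 2*t*(1-4*t)/(1+4*t)).
        { rewrite E4. unfold Rdiv in *. nra. }
        assert (D : 2*t*(1-4*t)/(1+4*t) * (1+4*t) = 2*t*(1-4*t)) by (field; lra).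
        set (q := 2*t*(1-4*t)/(1+4*t)) in *.
        assert (P := p2 t q ltac:(lra) H3 D). lra.
      * assert (B := nln2 (2*t) ltac:(lra)).
        assert (C : - t * ln t <= t * 0.6935 + 2*t*(1-2*t)/(1+2*t)).
        { rewrite E2. unfold Rdiv in *. nra. }
        assert (D : 2*t*(1-2*t)/(1+2*t) * (1+2*t) = 2*t*(1-2*t)) by (field; lra).
        set (q := 2*t*(1-2*t)/(1+2*t)) in *.
        assert (P := p3 t q ltac:(lra) ltac:(lra) D). lra.
Qed.
Lemma exp_mono (a b : R) : a <= b -> exp a <= exp b.
Proof. intros H. destruct (Rle_lt_or_eq_dec _ _ H). apply Rlt_le, exp_increasing; auto. subst; lra. Qed.

Lemma sum_term_le (f : nat -> R) (n i : nat) : (forall j, 0 <= f j) -> (i <= n)%nat ->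
  f i <= sum_f_R0 f n.
Proof.
  intros Hf Hi. induction n.
  - assert (i = 0%nat) by lia. subst. simpl. lra.
  - destruct (Nat.eq_dec i (S n)).
    + subst. simpl. assert (0 <= sum_f_R0 f n) by (apply cond_pos_sum; auto). lra.
    + simpl. assert (f i <= sum_f_R0 f n) by (apply IHn; lia). specialize (Hf (S n)). lra.
Qed.

Lemma C_pos (n m : nat) : 0 < Binomial.C n m.
Proof.
  unfold Binomial.C. apply Rdiv_lt_0_compat. apply INR_fact_lt_0.
  apply Rmult_lt_0_compat; apply INR_fact_lt_0.
Qed.

Lemma binom_bound (n m : nat) (u : R) : 0 <= u <= 1 -> (m <= n)%nat ->
  Binomial.C n m * u^m * (1-u)^(n-m) <= 1.
Proof.
  intros Hu Hm.
  assert (E : (u + (1-u))^n = 1) by (replace (u + (1-u)) with 1 by ring; apply pow1).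
  rewrite binomial in E. apply Rle_trans with (sum_f_R0 (fun i => Binomial.C n i * u ^ i * (1 - u) ^ (n - i)) n); [|right; exact E].
  apply (sum_term_le (fun i => Binomial.C n i * u ^ i * (1 - u) ^ (n - i))); auto.
  intros j. apply Rmult_le_pos. apply Rmult_le_pos. apply Rlt_le, C_pos.
  apply pow_le; lra. apply pow_le; lra.
Qed.

Lemma pow_exp_ln (x : R) (k : nat) : 0 < x -> x ^ k = exp (INR k * ln x).
Proof. intros Hx. rewrite <- Rpower_pow by auto. reflexivity. Qed.

Lemma npart (n m : nat) : (1 <= m)%nat -> (m <= n)%nat ->
  Binomial.C n m * (INR m / INR n) ^ (2*m) <= exp (0.181 * INR m).
Proof.
  intros Hm Hmn.
  assert (Hm0 : 0 < INR m) by (apply lt_0_INR; lia).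
  assert (Hn0 : 0 < INR n) by (apply lt_0_INR; lia).
  destruct (Nat.eq_dec n m) as [E|E].
  - subst. unfold Binomial.C. rewrite Nat.sub_diag.
    replace (INR m / INR m) with 1 by (field; lra). rewrite pow1.
    replace (INR (fact m) / (INR (fact m) * INR (fact 0))) with 1.
    + rewrite Rmult_1_l. assert (H := exp_ineq1_le (0.181 * INR m)). lra.
    + simpl. field. apply INR_fact_neq_0.
  - assert (Hnm : (m < n)%nat) by lia.
    set (u := INR m / INR n).
    assert (Hu : 0 < u < 1).
    { unfold u. split. apply Rdiv_lt_0_compat; lra.
      apply Rmult_lt_reg_r with (INR n). lra. unfold Rdiv. rewrite Rmult_assoc, Rinv_l by lra.
      rewrite Rmult_1_r, Rmult_1_l. apply lt_INR. auto. }
    assert (B := binom_bound n m u ltac:(lra) Hmn).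
    assert (Hp1 : 0 < u ^ m) by (apply pow_lt; lra).
    assert (Hp2 : 0 < (1-u) ^ (n-m)) by (apply pow_lt; lra).
    assert (Cb : Binomial.C n m <= / (u^m * (1-u)^(n-m))).
    { apply Rmult_le_reg_r with (u^m * (1-u)^(n-m)). nra.
      rewrite Rinv_l by nra. rewrite <- Rmult_assoc. lra. }
    replace (u ^ (2*m)) with (u^m * u^m) by (rewrite <- pow_add; f_equal; lia).
    assert (step : Binomial.C n m * (u^m*u^m) <= u^m / (1-u)^(n-m)).
    { apply Rle_trans with (/ (u^m * (1-u)^(n-m)) * (u^m*u^m)).
      apply Rmult_le_compat_r. nra. auto.
      right. field. split; lra. }
    eapply Rle_trans; [apply step|].
    set (t := (INR n - INR m) / INR m).
    assert (Ht : 0 < t).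
    { unfold t. apply Rdiv_lt_0_compat; auto. assert (INR m < INR n) by (apply lt_INR; auto). lra. }
    assert (Eu : u = / (1+t)) by (unfold u, t; field; split; lra).
    assert (Eu1 : 1 - u = t / (1+t)) by (unfold u, t; field; split; lra).
    assert (Enm : INR (n - m) = INR m * t) by (rewrite minus_INR by lia; unfold t; field; lra).
    rewrite (pow_exp_ln u m) by lra. rewrite (pow_exp_ln (1-u) (n-m)) by lra.
    unfold Rdiv. rewrite <- exp_Ropp, <- exp_plus. apply exp_mono.
    rewrite Eu1, Eu, Enm. rewrite ln_Rinv by lra. unfold Rdiv. rewrite ln_mult.
    rewrite ln_Rinv by lra.
    assert (G := g_bound t Ht). nra.
    lra. apply Rinv_0_lt_compat; lra.
Qed.
Lemma fact_S_R (n : nat) : INR (fact (S n)) = INR (S n) * INR (fact n).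
Proof. rewrite fact_simpl, mult_INR. reflexivity. Qed.

Lemma robbins_step (N : R) : 1 <= N -> (2*N+1) * ln (1 + /N) <= 2 + /(6*N*(N+1)).
Proof.
  intros HN. set (y := / (2*N+1)).
  assert (Hy : 0 < y < 1).
  { unfold y. split. apply Rinv_0_lt_compat; lra.
    rewrite <- Rinv_1. apply Rinv_lt_contravar; lra. }
  assert (E : 1 + / N = (1+y) * / (1-y)) by (unfold y; field; lra).
  rewrite E, ln_mult, ln_Rinv by (try apply Rinv_0_lt_compat; lra).
  assert (H := ln_atanh y ltac:(lra)).
  assert (E2 : 2*N+1 = /y) by (unfold y; rewrite Rinv_inv; reflexivity).
  rewrite E2.
  apply Rle_trans with (/y * (2*y + 2/3*y^3/(1-y^2))).
  - apply Rmult_le_compat_l. apply Rlt_le, Rinv_0_lt_compat; lra. lra.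
  - right. unfold y. field. split. lra. split. lra. nra.
Qed.

Lemma ln_1p_inv (m : R) : 1 <= m -> / (m+1) <= ln (1 + / m).
Proof.
  intros Hm. assert (0 < /m) by (apply Rinv_0_lt_compat; lra).
  eapply Rle_trans; [|apply ln_lb_frac; lra]. right. field. lra.
Qed.

Lemma pow_succ_split (m : nat) (a : nat) : (1 <= m)%nat ->
  INR (S m) ^ a = INR m ^ a * exp (INR a * ln (1 + / INR m)).
Proof.
  intros Hm. assert (H0 : 1 <= INR m) by (apply (le_INR 1); lia).
  rewrite <- pow_exp_ln by (assert (0 < /INR m) by (apply Rinv_0_lt_compat; lra); lra).
  rewrite <- Rpow_mult_distr. f_equal. rewrite S_INR. field. lra.
Qed.

Lemma stirling_up (m : nat) : (1 <= m)%nat ->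
  INR (fact m) * exp (INR m) <= exp 1 * INR m * INR m ^ m.
Proof.
  intros Hm. induction m as [|m IH]; [lia|].
  destruct (Nat.eq_dec m 0) as [E|E].
  - subst. simpl. lra.
  - specialize (IH ltac:(lia)).
    assert (H1 : 1 <= INR m) by (apply (le_INR 1); lia).
    rewrite fact_S_R, S_INR, exp_plus. rewrite <- S_INR.
    rewrite (pow_succ_split m (S m)) by lia.
    assert (L := ln_1p_inv (INR m) H1).
    assert (Ex : 1 <= INR (S m) * ln (1 + / INR m)).
    { rewrite S_INR. apply Rmult_le_reg_r with (/ (INR m + 1)).
      apply Rinv_0_lt_compat; lra. rewrite Rmult_1_l.
      rewrite Rmult_comm, <- Rmult_assoc, Rinv_l, Rmult_1_l by lra. auto. }
    assert (Ee : exp 1 <= exp (INR (S m) * ln (1 + / INR m))) by (apply exp_mono; auto).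
    assert (0 < INR (S m)) by (apply lt_0_INR; lia).
    assert (0 < exp 1) by apply exp_pos.
    assert (0 < INR m ^ m) by (apply pow_lt; lra).
    simpl pow. 
    assert (0 <= INR (fact m)) by (apply pos_INR).
    assert (0 < exp (INR m)) by apply exp_pos.
    apply Rle_trans with (INR (S m) * (exp 1 * INR m * INR m ^ m) * exp 1).
    + replace (INR (S m) * INR (fact m) * (exp (INR m) * exp 1)) with
        (INR (S m) * (INR (fact m) * exp (INR m)) * exp 1) by ring.
      apply Rmult_le_compat_r. lra. apply Rmult_le_compat_l; lra.
    + assert (0 <= exp 1 * INR (S m) * (INR m * INR m ^ m)) by
        (repeat apply Rmult_le_pos; lra).
      nra.
Qed.

Lemma robbins (N : nat) : (1 <= N)%nat ->
  exp (11/6 + / (6 * INR N)) * INR N ^ (2*N+1) <= INR (fact N) ^ 2 * exp (2 * INR N).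
Proof.
  intros HN. induction N as [|N IH]; [lia|].
  destruct (Nat.eq_dec N 0) as [E|E].
  - subst. simpl. replace (11/6 + /(6*1)) with (2*1) by field. lra.
  - specialize (IH ltac:(lia)).
    assert (H1 : 1 <= INR N) by (apply (le_INR 1); lia).
    assert (Rs := robbins_step (INR N) H1).
    set (Y := exp (INR (2*N+1) * ln (1 + / INR N))).
    assert (P1 : INR (S N) ^ (2 * S N + 1) = INR (S N)^2 * (INR N ^ (2*N+1) * Y)).
    { replace (2 * S N + 1)%nat with (2 + (2*N+1))%nat by lia.
      rewrite pow_add. f_equal. unfold Y. apply pow_succ_split. lia. }
    assert (P2 : INR (fact (S N)) ^ 2 = INR (S N)^2 * INR (fact N) ^ 2)
      by (rewrite fact_S_R; ring).
    assert (P3 : exp (2 * INR (S N)) = exp (2 * INR N) * exp 2)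
      by (rewrite <- exp_plus; f_equal; rewrite S_INR; ring).
    rewrite P1, P2, P3.
    assert (EA : exp (11/6 + / (6 * INR (S N))) * Y <= exp (11/6 + / (6 * INR N)) * exp 2).
    { unfold Y. rewrite <- !exp_plus. apply exp_mono. rewrite S_INR.
      replace (INR (2*N+1)) with (2 * INR N + 1) by (rewrite plus_INR, mult_INR; simpl; ring).
      replace (/ (6 * INR N)) with (/(6*INR N*(INR N + 1)) + / (6*(INR N + 1))) by (field; lra).
      lra. }
    set (X := exp (11 / 6 + / (6 * INR (S N)))) in *.
    set (Z := exp (11 / 6 + / (6 * INR N))) in *.
    set (W := INR N ^ (2*N+1)) in *.
    assert (0 < W) by (apply pow_lt; lra).
    assert (0 < exp 2) by apply exp_pos.
    assert (0 < INR (S N) ^ 2) by (apply pow_lt; apply lt_0_INR; lia).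
    assert (0 < X) by apply exp_pos.
    assert (0 < Y) by apply exp_pos.
    assert (X * Y * W <= Z * exp 2 * W) by (apply Rmult_le_compat_r; lra).
    assert (Z * W * exp 2 <= INR (fact N) ^ 2 * exp (2 * INR N) * exp 2) by (apply Rmult_le_compat_r; lra).
    replace (X * (INR (S N) ^ 2 * (W * Y))) with (INR (S N) ^ 2 * (X * Y * W)) by ring.
    replace (INR (S N) ^ 2 * INR (fact N) ^ 2 * (exp (2 * INR N) * exp 2)) with
      (INR (S N) ^ 2 * (INR (fact N) ^ 2 * exp (2 * INR N) * exp 2)) by ring.
    apply Rmult_le_compat_l. lra. lra.
Qed.
Fixpoint Pj (j : nat) (t : R) : R :=
  match j with O => 1 | S j' => t ^ (S j') + INR (S j') * Pj j' t end.

Definition Qj (j : nat) (t : R) : R := exp (- t) * Pj j t.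

Lemma Pj_derive (j : nat) (t : R) : is_derive (Pj j) t (Pj j t - t ^ j).
Proof.
  induction j.
  - simpl. replace (1 - 1) with (@zero R_AbsRing) by (unfold zero; simpl; ring).
    apply (is_derive_const (K:=R_AbsRing) (V:=R_NormedModule) 1).
  - assert (H1 : is_derive (fun t => t ^ S j) t (INR (S j) * 1 * t ^ Init.Nat.pred (S j)))
      by (apply is_derive_pow, (is_derive_id (K:=R_AbsRing))).
    assert (H2 := is_derive_scal _ _ (INR (S j)) _ IHj).
    assert (H3 := is_derive_plus _ _ _ _ _ H1 H2).
    replace (Pj (S j) t - t ^ S j) with
      (plus (INR (S j) * 1 * t ^ Init.Nat.pred (S j)) (INR (S j) * (Pj j t - t ^ j))).
    + exact H3.
    + unfold plus; simpl. ring.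
Qed.

Lemma Qj_derive (j : nat) (t : R) : is_derive (Qj j) t (- (t ^ j * exp (-t))).
Proof.
  unfold Qj.
  assert (H1 : is_derive (fun t => exp (-t)) t (- exp (-t))) by (auto_derive; auto; ring).
  assert (H := is_derive_mult _ _ _ _ _ H1 (Pj_derive j t) ltac:(intros; apply Rmult_comm)).
  replace (- (t ^ j * exp (- t))) with (plus (mult (- exp (- t)) (Pj j t)) (mult (exp (- t)) (Pj j t - t ^ j))).
  exact H. unfold plus, mult; simpl. ring.
Qed.

Lemma cont_pe (j : nat) (t : R) : continuous (fun t => t ^ j * exp (- t)) t.
Proof. apply cont_d. auto_derive. auto. Qed.

Lemma Qj_int (j : nat) (a b : R) :
  is_RInt (fun t => t ^ j * exp (- t)) a b (Qj j a - Qj j b).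
Proof.
  assert (H := is_RInt_derive (fun t => - Qj j t) (fun t => t ^ j * exp (- t)) a b).
  replace (Qj j a - Qj j b) with (minus (- Qj j b) (- Qj j a)) by (unfold minus, plus, opp; simpl; ring).
  apply H.
  - intros u _. assert (D := Qj_derive j u).
    replace (u ^ j * exp (- u)) with (opp (- (u ^ j * exp (- u)))) by (unfold opp; simpl; ring).
    apply (is_derive_opp (Qj j) u). exact D.
  - intros u _. apply cont_pe.
Qed.

Lemma Pj_0 (j : nat) : Pj j 0 = INR (fact j).
Proof.
  induction j. reflexivity. simpl Pj. rewrite IHj, fact_S_R. simpl. ring.
Qed.

Lemma Qj_0 (j : nat) : Qj j 0 = INR (fact j).
Proof. unfold Qj. rewrite Ropp_0, exp_0, Pj_0. ring. Qed.

Lemma Pj_pos (j : nat) (t : R) : 0 <= t -> 0 <= Pj j t.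
Proof.
  intros Ht. induction j. simpl; lra. change (Pj (S j) t) with (t ^ S j + INR (S j) * Pj j t).
  apply Rplus_le_le_0_compat. apply pow_le; auto. apply Rmult_le_pos; auto. apply pos_INR.
Qed.

Lemma Qj_pos (j : nat) (t : R) : 0 <= t -> 0 <= Qj j t.
Proof. intros. unfold Qj. apply Rmult_le_pos. apply Rlt_le, exp_pos. apply Pj_pos; auto. Qed.

Lemma Qj_dec (j : nat) (a b : R) : 0 <= a -> a <= b -> Qj j b <= Qj j a.
Proof.
  intros Ha Hab. assert (H := is_RInt_ge_0 _ a b _ Hab (Qj_int j a b)).
  cut (0 <= Qj j a - Qj j b). lra. apply H.
  intros u Hu. apply Rmult_le_pos. apply pow_le. lra. apply Rlt_le, exp_pos.
Qed.
Lemma pow_le1 (u : R) (j : nat) : 0 <= u <= 1 -> u ^ j <= 1.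
Proof. intros H. induction j. simpl; lra. simpl. assert (0 <= u^j) by (apply pow_le; lra). nra. Qed.

Lemma Qj_near0 (j : nat) (a : R) : 0 <= a <= 1 -> INR (fact j) - a <= Qj j a.
Proof.
  intros Ha. assert (H := Qj_int j 0 a). rewrite Qj_0 in H.
  assert (Hc := is_RInt_const (V:=R_NormedModule) 0 a 1).
  assert (L := is_RInt_le _ _ 0 a _ _ (proj1 Ha) H Hc).
  cut (INR (fact j) - Qj j a <= scal (a - 0) 1). unfold scal; simpl; unfold mult; simpl. lra.
  apply L. intros u Hu.
  assert (u ^ j <= 1) by (apply pow_le1; lra).
  assert (exp (-u) <= 1) by (rewrite <- exp_0; apply exp_mono; lra).
  assert (0 <= u ^ j) by (apply pow_le; lra). assert (0 < exp (-u)) by apply exp_pos. nra.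
Qed.

Lemma exp_ge_mono (b : R) (n : nat) : 0 <= b -> b ^ n / INR (fact n) <= exp b.
Proof.
  intros Hb. eapply Rle_trans; [|apply (exp_ge_taylor b n Hb)].
  apply (sum_term_le (fun k => b ^ k / INR (fact k)) n n); [|lia].
  intros k. apply Rdiv_le_0_compat. apply pow_le; auto. apply INR_fact_lt_0.
Qed.

Lemma Pj_bound (j : nat) (b : R) : 1 <= b -> Pj j b <= INR (fact (S j)) * b ^ j.
Proof.
  intros Hb. induction j.
  - simpl. lra.
  - change (Pj (S j) b) with (b ^ S j + INR (S j) * Pj j b).
    assert (b ^ j <= b ^ S j) by (simpl; assert (1 <= b^j) by (apply pow_R1_Rle; lra); nra).
    assert (0 <= INR (S j)) by apply pos_INR.
    assert (1 <= INR (fact (S j))) by (apply (le_INR 1); apply lt_O_fact).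
    assert (E : INR (fact (S (S j))) = INR (S (S j)) * INR (fact (S j))) by apply fact_S_R.
    rewrite E. rewrite (S_INR (S j)).
    assert (INR (S j) * Pj j b <= INR (S j) * (INR (fact (S j)) * b ^ j)) by (apply Rmult_le_compat_l; auto).
    assert (0 <= b ^ j) by (apply pow_le; lra).
    assert (0 <= INR (S j) * INR (fact (S j)) * (b ^ S j - b ^ j)) by
      (apply Rmult_le_pos; [apply Rmult_le_pos; lra|lra]).
    assert (0 <= (INR (fact (S j)) - 1) * b ^ S j) by (apply Rmult_le_pos; lra).
    nra.
Qed.

Lemma Qj_inf (j : nat) (b : R) : 1 <= b ->
  Qj j b <= INR (fact (S j)) * INR (fact (S (S j))) / b.
Proof.
  intros Hb. unfold Qj.
  assert (E := exp_ge_mono b (S (S j)) ltac:(lra)).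
  assert (Hf := INR_fact_lt_0 (S (S j))).
  assert (Hp : 0 < b ^ j) by (apply pow_lt; lra).
  assert (Hexp : exp (- b) <= INR (fact (S (S j))) / b ^ (S (S j))).
  { rewrite exp_Ropp.
    assert (0 < b ^ S (S j) / INR (fact (S (S j)))) by (apply Rdiv_lt_0_compat; auto; apply pow_lt; lra).
    apply Rle_trans with (/ (b ^ S (S j) / INR (fact (S (S j))))).
    apply Rinv_le_contravar; auto. right. field. repeat split; try (apply pow_nonzero); lra. }
  assert (PB := Pj_bound j b Hb).
  assert (0 <= Pj j b) by (apply Pj_pos; lra).
  apply Rle_trans with (INR (fact (S (S j))) / b ^ (S (S j)) * (INR (fact (S j)) * b ^ j)).
  - apply Rmult_le_compat; auto. apply Rlt_le, exp_pos.
  - replace (INR (fact (S (S j))) / b ^ (S (S j)) * (INR (fact (S j)) * b ^ j)) with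
      (INR (fact (S j)) * INR (fact (S (S j))) / b * / b).
    2: { simpl pow. field. repeat split; try (apply pow_nonzero); lra. }
    assert (0 < /b <= 1) by (split; [apply Rinv_0_lt_compat; lra | rewrite <- Rinv_1; apply Rinv_le_contravar; lra]).
    assert (0 <= INR (fact (S j)) * INR (fact (S (S j))) / b).
    { apply Rdiv_le_0_compat. apply Rmult_le_pos; apply pos_INR. lra. }
    nra.
Qed.
Definition gf (x t : R) : R := Rpower t (x - 1) * exp (- t).

Lemma gf_pos (x t : R) : 0 <= gf x t.
Proof. unfold gf, Rpower. apply Rlt_le, Rmult_lt_0_compat; apply exp_pos. Qed.

Lemma gf_cont (x t : R) : 0 < t -> continuous (gf x) t.
Proof. intros Ht. apply cont_d. unfold gf, Rpower. auto_derive. auto. Qed.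

Lemma gf_ex (x a b : R) : 0 < a -> a <= b -> ex_RInt (gf x) a b.
Proof.
  intros Ha Hab. apply (ex_RInt_continuous (V:=R_CompleteNormedModule)). intros z Hz.
  rewrite Rmin_left in Hz by lra. apply gf_cont. lra.
Qed.

Lemma Rpower_split (x t : R) (N : nat) : (1 <= N)%nat -> 0 < t ->
  Rpower t (x - 1) = t ^ (N - 1) * Rpower t (x - INR N).
Proof.
  intros HN Ht. rewrite <- Rpower_pow by auto. rewrite <- Rpower_plus.
  f_equal. rewrite minus_INR by lia. simpl. ring.
Qed.

Lemma Rpower_tangent (t s : R) (N : nat) : (1 <= N)%nat -> 0 < t -> s <= 0 ->
  Rpower (INR N) s * ((1 - s) + s / INR N * t) <= Rpower t s.
Proof.
  intros HN Ht Hs. assert (H0 : 0 < INR N) by (apply lt_0_INR; lia).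
  assert (E : Rpower t s = Rpower (INR N) s * Rpower (t / INR N) s).
  { rewrite Rpower_mult_distr by (try apply Rdiv_lt_0_compat; lra). f_equal. field. lra. }
  rewrite E. apply Rmult_le_compat_l. unfold Rpower. apply Rlt_le, exp_pos.
  unfold Rpower. eapply Rle_trans; [|apply exp_ineq1_le].
  assert (L := ln_le_xm1 (t / INR N) ltac:(apply Rdiv_lt_0_compat; lra)).
  assert (s * ln (t / INR N) >= s * (t / INR N - 1)) by nra.
  unfold Rdiv in *. lra.
Qed.

Lemma Rpower_upper (t s : R) : 0 < t -> -1 <= s <= 0 -> Rpower t s <= 1 + / t.
Proof.
  intros Ht Hs. unfold Rpower. assert (0 < /t) by (apply Rinv_0_lt_compat; lra).
  destruct (Rle_or_lt 1 t).
  - assert (0 <= ln t) by (rewrite <- ln_1; apply ln_le; lra).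
    assert (exp (s * ln t) <= exp 0) by (apply exp_mono; nra). rewrite exp_0 in H2. lra.
  - assert (ln t < 0) by (rewrite <- ln_1; apply ln_increasing; lra).
    assert (exp (s * ln t) <= exp (- ln t)) by (apply exp_mono; nra).
    rewrite <- ln_Rinv, exp_ln in H2 by (try apply Rinv_0_lt_compat; lra). lra.
Qed.
Lemma gf_upper (x : R) (N : nat) : (1 <= N)%nat -> INR N - 1 < x -> x <= INR N -> 1 <= x ->
  forall t, 0 < t -> gf x t <= t^(N-1) * exp(-t) + t^(pred (N-1)) * exp(-t).
Proof.
  intros HN Hx1 Hx2 Hx t Ht. unfold gf. rewrite (Rpower_split x t N HN Ht).
  assert (0 < exp (-t)) by apply exp_pos.
  destruct (Nat.eq_dec N 1) as [E|E].
  - subst. simpl in *. replace (x - 1) with 0 by lra. rewrite Rpower_O by auto. lra.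
  - assert (Hs : -1 <= x - INR N <= 0) by lra.
    assert (U := Rpower_upper t _ Ht Hs).
    replace (t ^ (N-1)) with (t * t ^ (pred (N-1))) by
      (assert (EE : (N-1)%nat = S (pred (N-1))) by lia; rewrite EE at 2; reflexivity).
    assert (0 <= t ^ pred (N-1)) by (apply pow_le; lra).
    assert (t * / t = 1) by (field; lra).
    assert (0 <= t * t ^ pred (N-1) * exp (-t)) by (repeat apply Rmult_le_pos; lra).
    assert (t * t ^ pred (N - 1) * Rpower t (x - INR N) * exp (- t) <= t * t ^ pred (N - 1) * (1 + /t) * exp (-t)).
    { apply Rmult_le_compat_r. lra. apply Rmult_le_compat_l. nra. auto. }
    eapply Rle_trans; [exact H3|]. right.
    replace (t * t ^ pred (N - 1) * (1 + / t)) with (t * t ^ pred (N - 1) + t ^ pred (N - 1) * (t * / t)) by ring.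
    rewrite H1. ring.
Qed.

Lemma gf_int_bound (x : R) (N : nat) : (1 <= N)%nat -> INR N - 1 < x -> x <= INR N -> 1 <= x ->
  forall a b, 0 < a -> a <= b -> RInt (gf x) a b <= INR (fact (N-1)) + INR (fact (pred (N-1))).
Proof.
  intros HN Hx1 Hx2 Hx a b Ha Hab.
  set (j := (N-1)%nat). set (j' := pred (N-1)).
  assert (Hh := is_RInt_plus _ _ a b _ _ (Qj_int j a b) (Qj_int j' a b)).
  assert (Hg := RInt_correct _ _ _ (gf_ex x a b Ha Hab)).
  assert (L := is_RInt_le _ _ a b _ _ Hab Hg Hh).
  assert (Hq1 := Qj_dec j 0 a ltac:(lra) ltac:(lra)).
  assert (Hq2 := Qj_dec j' 0 a ltac:(lra) ltac:(lra)).
  assert (Hq3 := Qj_pos j b ltac:(lra)).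
  assert (Hq4 := Qj_pos j' b ltac:(lra)).
  rewrite !Qj_0 in *.
  cut (RInt (gf x) a b <= plus (Qj j a - Qj j b) (Qj j' a - Qj j' b)).
  { unfold plus; simpl. intros. unfold j' in *. unfold j in *. lra. }
  apply L. intros u Hu. unfold plus; simpl. apply (gf_upper x N); auto. lra.
Qed.

Lemma gf_int_lower (x : R) (N : nat) : (1 <= N)%nat -> INR N - 1 < x -> x <= INR N -> 1 <= x ->
  forall a b, 0 < a -> a <= 1 -> 1 <= b ->
  Rpower (INR N) (x - INR N) * INR (fact (N-1))
   - Rpower (INR N) (x - INR N) * (1 - (x - INR N)) * (a + Qj (N-1) b) <= RInt (gf x) a b.
Proof.
  intros HN Hx1 Hx2 Hx a b Ha Ha1 Hb.
  set (j := (N-1)%nat). set (s := x - INR N).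
  assert (HN0 : 0 < INR N) by (apply lt_0_INR; lia).
  assert (Hs : -1 < s <= 0) by (unfold s; lra).
  set (p := Rpower (INR N) s).
  assert (Hp : 0 < p) by (unfold p, Rpower; apply exp_pos).
  set (c1 := p * (1 - s)). set (c2 := p * (s / INR N)).
  assert (Hc1 := is_RInt_scal _ a b c1 _ (Qj_int j a b)).
  assert (Hc2 := is_RInt_scal _ a b c2 _ (Qj_int (S j) a b)).
  assert (Hg := is_RInt_plus _ _ a b _ _ Hc1 Hc2).
  assert (Hab : a <= b) by lra.
  assert (Hf := RInt_correct _ _ _ (gf_ex x a b Ha Hab)).
  assert (L := is_RInt_le _ _ a b _ _ Hab Hg Hf).
  assert (I : plus (scal c1 (Qj j a - Qj j b)) (scal c2 (Qj (S j) a - Qj (S j) b)) <= RInt (gf x) a b).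
  { apply L. intros u Hu. unfold plus, scal; simpl; unfold mult; simpl.
    unfold gf. rewrite (Rpower_split x u N HN ltac:(lra)). fold j. fold s.
    assert (T := Rpower_tangent u s N HN ltac:(lra) ltac:(lra)). fold p in T.
    assert (0 <= u ^ j * exp (-u)) by (apply Rmult_le_pos; [apply pow_le; lra| apply Rlt_le, exp_pos]).
    apply Rle_trans with (u ^ j * exp (- u) * (p * ((1 - s) + s / INR N * u))).
    { right. unfold c1, c2. simpl. field. lra. }
    replace (u ^ j * Rpower u s * exp (- u)) with (u ^ j * exp (- u) * Rpower u s) by ring.
    apply Rmult_le_compat_l; auto. }
  unfold plus, scal in I; simpl in I; unfold mult in I; simpl in I.
  assert (Hq1 := Qj_near0 j a ltac:(lra)).
  assert (Hq2 := Qj_dec (S j) 0 a ltac:(lra) ltac:(lra)). rewrite Qj_0 in Hq2.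
  assert (Hq3 := Qj_pos (S j) b ltac:(lra)).
  assert (Ef : INR (fact (S j)) = INR N * INR (fact j)).
  { rewrite fact_S_R. f_equal. unfold j. f_equal. lia. }
  assert (Hc1p : 0 <= c1) by (unfold c1; apply Rmult_le_pos; lra).
  assert (Hc2n : c2 <= 0).
  { unfold c2. assert (s / INR N <= 0). { unfold Rdiv. assert (0 < / INR N) by (apply Rinv_0_lt_compat; lra). nra. } nra. }
  assert (c2 * Qj (S j) a >= c2 * INR (fact (S j))) by nra.
  assert (c2 * Qj (S j) b <= 0) by nra.
  assert (c1 * Qj j a >= c1 * (INR (fact j) - a)) by nra.
  assert (E2 : c2 * INR (fact (S j)) = p * s * INR (fact j)) by (rewrite Ef; unfold c2; field; lra).
  unfold c1 in *. nra.
Qed.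
Lemma gf_mono (x a b a' b' : R) : 0 < a' -> a' <= a -> a <= b -> b <= b' ->
  RInt (gf x) a b <= RInt (gf x) a' b'.
Proof.
  intros H1 H2 H3 H4.
  assert (E1 := RInt_Chasles (gf x) a' a b' (gf_ex x a' a H1 H2) (gf_ex x a b' ltac:(lra) ltac:(lra))).
  assert (E2 := RInt_Chasles (gf x) a b b' (gf_ex x a b ltac:(lra) H3) (gf_ex x b b' ltac:(lra) H4)).
  unfold plus in E1, E2; simpl in E1, E2.
  assert (0 <= RInt (gf x) a' a) by (apply RInt_ge_0; auto; [apply gf_ex; auto | intros; apply gf_pos]).
  assert (0 <= RInt (gf x) b b') by (apply RInt_ge_0; auto; [apply gf_ex; lra | intros; apply gf_pos]).
  lra.
Qed.

Lemma Gamma_lb (x : R) (N : nat) : (1 <= N)%nat -> INR N - 1 < x -> x <= INR N -> 1 <= x ->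
  Rpower (INR N) (x - INR N) * INR (fact (N-1)) <= Gamma x.
Proof.
  intros HN Hx1 Hx2 Hx.
  set (E := fun y => exists a b, 0 < a /\ a <= b /\ y = RInt (gf x) a b).
  assert (HB : bound E).
  { exists (INR (fact (N-1)) + INR (fact (pred (N-1)))). intros y [a [b [Ha [Hab ->]]]].
    apply (gf_int_bound x N); auto. }
  assert (HE : exists y, E y) by (exists (RInt (gf x) 1 1); exists 1, 1; repeat split; lra).
  destruct (completeness E HB HE) as [Sv [HS1 HS2]].
  assert (Hup : forall a b, 0 < a -> a <= b -> RInt (gf x) a b <= Sv).
  { intros a b Ha Hab. apply HS1. exists a, b. auto. }
  assert (Hgen : is_RInt_gen (gf x) (at_right 0) (Rbar_locally p_infty) Sv).
  { unfold is_RInt_gen, filterlimi, filter_le, filtermapi.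
    intros P [eps HP].
    assert (Hex : exists a0 b0, 0 < a0 /\ a0 <= b0 /\ Sv - eps < RInt (gf x) a0 b0).
    { destruct (Classical_Prop.classic (exists a0 b0, 0 < a0 /\ a0 <= b0 /\ Sv - eps < RInt (gf x) a0 b0)) as [H|H]; auto.
      exfalso. assert (Sv <= Sv - eps).
      { apply HS2. intros y [a [b [Ha [Hab ->]]]].
        destruct (Rle_or_lt (RInt (gf x) a b) (Sv - eps)) as [H'|H']; auto.
        exfalso. apply H. exists a, b. auto. }
      destruct eps; simpl in *. lra. }
    destruct Hex as [a0 [b0 [Ha0 [Hab0 Hy]]]].
    apply Filter_prod with (fun a => 0 < a < a0) (fun b => b0 < b).
    - unfold at_right, within, locally. exists (mkposreal a0 Ha0). intros y Hy' Hpos.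
      unfold ball in Hy'; simpl in Hy'. unfold AbsRing_ball, abs, minus, plus, opp in Hy'; simpl in Hy'.
      split; auto. rewrite Ropp_0, Rplus_0_r in Hy'. apply Rabs_def2 in Hy'. lra.
    - exists b0. auto.
    - intros a b [Ha1 Ha2] Hb. exists (RInt (gf x) a b). split.
      + exact (RInt_correct _ _ _ (gf_ex x a b ltac:(lra) ltac:(lra))).
      + apply HP. unfold ball; simpl. unfold AbsRing_ball, abs, minus, plus, opp; simpl.
        assert (M := gf_mono x a0 b0 a b Ha1 ltac:(lra) Hab0 ltac:(lra)).
        assert (U := Hup a b Ha1 ltac:(lra)).
        apply Rabs_def1; destruct eps; simpl in *; lra. }
  assert (EG : Gamma x = Sv).
  { assert (U := @is_RInt_gen_unique R_CompleteNormedModule (at_right 0) (Rbar_locally p_infty)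
      (Proper_StrongProper _ (at_right_proper_filter 0))
      (Proper_StrongProper _ (Rbar_locally_filter p_infty)) (gf x) Sv Hgen).
    unfold Gamma. exact U. }
  rewrite EG.
  set (T := Rpower (INR N) (x - INR N) * INR (fact (N-1))).
  set (c := Rpower (INR N) (x - INR N) * (1 - (x - INR N))).
  assert (Hc : 0 <= c).
  { unfold c, Rpower. apply Rmult_le_pos. apply Rlt_le, exp_pos. lra. }
  set (K := INR (fact (S (N-1))) * INR (fact (S (S (N-1))))).
  assert (HK : 0 < K) by (apply Rmult_lt_0_compat; apply INR_fact_lt_0).
  assert (Hd : forall d, 0 < d <= 1 -> T - c * (2 * d) <= Sv).
  { intros d Hd. set (b := Rmax 1 (K / d)).
    assert (Hb1 : 1 <= b) by apply Rmax_l.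
    assert (Hb2 : K / d <= b) by apply Rmax_r.
    assert (Q := Qj_inf (N-1) b Hb1). fold K in Q.
    assert (Qd : Qj (N-1) b <= d).
    { eapply Rle_trans; [exact Q|]. apply Rmult_le_reg_r with b. lra.
      unfold Rdiv. rewrite Rmult_assoc, Rinv_l, Rmult_1_r by lra.
      apply Rmult_le_reg_r with (/d). apply Rinv_0_lt_compat; lra.
      replace (d * b * / d) with b by (field; lra). exact Hb2. }
    assert (L := gf_int_lower x N HN Hx1 Hx2 Hx d b ltac:(lra) ltac:(lra) Hb1).
    fold T c in L.
    assert (U := Hup d b ltac:(lra) ltac:(lra)).
    assert (c * (d + Qj (N-1) b) <= c * (2 * d)) by (apply Rmult_le_compat_l; lra).
    lra. }
  destruct (Rle_or_lt T Sv) as [H|H]; auto.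
  exfalso. set (d := Rmin 1 ((T - Sv) / (4 * c + 1))).
  assert (Hd1 : 0 < d).
  { unfold d. apply Rmin_case. lra. apply Rdiv_lt_0_compat; lra. }
  assert (Hd2 : d <= 1) by apply Rmin_l.
  assert (Hd3 : d <= (T - Sv) / (4 * c + 1)) by apply Rmin_r.
  assert (Hd4 : d * (4 * c + 1) <= T - Sv).
  { apply Rmult_le_reg_r with (/ (4*c+1)). apply Rinv_0_lt_compat; lra.
    rewrite Rmult_assoc, Rinv_r, Rmult_1_r by lra. exact Hd3. }
  assert (X := Hd d (conj Hd1 Hd2)). nra.
Qed.
Lemma N_facts (m k : nat) : (1 <= k)%nat -> (k <= m)%nat ->
  let N := ((m + k - 1) / k)%nat in
  (1 <= N)%nat /\ ((N - 1) * k < m)%nat /\ (m <= N * k)%nat.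
Proof.
  intros Hk Hkm N.
  assert (Hd := Nat.div_mod_eq (m + k - 1) k).
  assert (Hr := Nat.mod_upper_bound (m + k - 1) k ltac:(lia)).
  fold N in Hd.
  set (r := ((m + k - 1) mod k)%nat) in *.
  assert (m <= N * k)%nat by nia.
  assert ((N-1)*k < m)%nat.
  { destruct N. nia. replace (S N - 1)%nat with N by lia. nia. }
  split; [|split]; auto.
  destruct N; nia.
Qed.

Lemma le_of_ln (Z W : R) : 0 < Z -> 0 < W -> ln Z <= ln W -> Z <= W.
Proof. intros. rewrite <- (exp_ln Z), <- (exp_ln W) by auto. apply exp_mono; auto. Qed.

Lemma ln_pow' (x : R) (n : nat) : 0 < x -> ln (x ^ n) = INR n * ln x.
Proof. intros. apply ln_pow; auto. Qed.

Lemma Gamma_pow_lb (m k : nat) : (1 <= k)%nat -> (k <= m)%nat ->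
  let N := ((m + k - 1) / k)%nat in
  0 < Gamma (INR m / INR k) /\
  INR k * ln (INR (fact (N-1))) + (INR m - INR (N * k)) * ln (INR N) <= INR k * ln (Gamma (INR m / INR k)).
Proof.
  intros Hk Hkm N. destruct (N_facts m k Hk Hkm) as [HN [H1 H2]]. fold N in HN, H1, H2.
  assert (Hk0 : 0 < INR k) by (apply lt_0_INR; lia).
  assert (HN0 : 0 < INR N) by (apply lt_0_INR; lia).
  set (x := INR m / INR k).
  assert (Hx1 : INR N - 1 < x).
  { unfold x. apply Rmult_lt_reg_r with (INR k). lra. unfold Rdiv. rewrite Rmult_assoc, Rinv_l, Rmult_1_r by lra.
    assert (INR ((N-1)*k) < INR m) by (apply lt_INR; auto).
    rewrite mult_INR, minus_INR in H by lia. simpl in H. lra. }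
  assert (Hx2 : x <= INR N).
  { unfold x. apply Rmult_le_reg_r with (INR k). lra. unfold Rdiv. rewrite Rmult_assoc, Rinv_l, Rmult_1_r by lra.
    rewrite <- mult_INR. apply le_INR; auto. }
  assert (Hx : 1 <= x).
  { unfold x. apply Rmult_le_reg_r with (INR k). lra. unfold Rdiv. rewrite Rmult_assoc, Rinv_l, Rmult_1_r by lra.
    rewrite Rmult_1_l. apply le_INR; auto. }
  assert (G := Gamma_lb x N HN Hx1 Hx2 Hx).
  assert (Hp : 0 < Rpower (INR N) (x - INR N)) by (unfold Rpower; apply exp_pos).
  assert (Hf : 0 < INR (fact (N-1))) by apply INR_fact_lt_0.
  split. { apply Rlt_le_trans with (2 := G). apply Rmult_lt_0_compat; auto. }
  assert (L : ln (Rpower (INR N) (x - INR N) * INR (fact (N-1))) <= ln (Gamma x)).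
  { destruct (Rle_lt_or_eq_dec _ _ G) as [G'|G']. apply Rlt_le, ln_increasing; auto.
    apply Rmult_lt_0_compat; auto. rewrite G'. lra. }
  rewrite ln_mult, ln_Rpower in L by auto.
  assert (E : INR k * (x - INR N) = INR m - INR (N * k)).
  { unfold x. rewrite mult_INR. field. lra. }
  assert (0 <= INR k) by lra.
  apply Rmult_le_compat_l with (r := INR k) in L; auto.
  rewrite <- E. lra.
Qed.
Lemma ln_fact_up (m : nat) : (1 <= m)%nat ->
  ln (INR (fact m)) <= 1 + ln (INR m) + INR m * ln (INR m) - INR m.
Proof.
  intros Hm. assert (H := stirling_up m Hm).
  assert (H0 : 0 < INR m) by (apply lt_0_INR; lia).
  assert (Hf := INR_fact_lt_0 m).
  assert (L : ln (INR (fact m) * exp (INR m)) <= ln (exp 1 * INR m * INR m ^ m)).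
  { destruct (Rle_lt_or_eq_dec _ _ H) as [H'|H']. apply Rlt_le, ln_increasing; auto.
    apply Rmult_lt_0_compat; auto; apply exp_pos. rewrite H'; lra. }
  rewrite !ln_mult, !ln_exp, ln_pow' in L by (try apply Rmult_lt_0_compat; try apply exp_pos; try apply pow_lt; auto).
  lra.
Qed.

Lemma ln_robbins (N : nat) : (1 <= N)%nat ->
  11/6 + / (6 * INR N) + (2 * INR N + 1) * ln (INR N) <= 2 * ln (INR (fact N)) + 2 * INR N.
Proof.
  intros HN. assert (H := robbins N HN).
  assert (H0 : 0 < INR N) by (apply lt_0_INR; lia).
  assert (Hf := INR_fact_lt_0 N).
  assert (L : ln (exp (11/6 + / (6 * INR N)) * INR N ^ (2*N+1)) <= ln (INR (fact N) ^ 2 * exp (2 * INR N))).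
  { destruct (Rle_lt_or_eq_dec _ _ H) as [H'|H']. apply Rlt_le, ln_increasing; auto.
    apply Rmult_lt_0_compat. apply exp_pos. apply pow_lt; auto. rewrite H'; lra. }
  rewrite !ln_mult, !ln_exp, !ln_pow' in L by (try apply Rmult_lt_0_compat; try apply exp_pos; try apply pow_lt; auto).
  replace (INR (2*N+1)) with (2 * INR N + 1) in L by (rewrite plus_INR, mult_INR; simpl; ring).
  rewrite (ln_mult (INR (fact N) ^ 2)) in L by (try apply pow_lt; try apply exp_pos; auto).
  rewrite ln_exp, ln_pow' in L by auto.
  replace (INR 2) with 2 in L by (simpl; ring). lra.
Qed.

Lemma ln_fact_lo (N : nat) : (1 <= N)%nat ->
  11/6 + (2 * INR N - 1) * ln (INR N) - 2 * INR N <= 2 * ln (INR (fact (N-1))).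
Proof.
  intros HN. assert (H := ln_robbins N HN).
  assert (H0 : 0 < INR N) by (apply lt_0_INR; lia).
  assert (E : INR (fact N) = INR N * INR (fact (N-1))).
  { replace N with (S (N-1)) at 1 by lia. rewrite fact_S_R. f_equal. f_equal. lia. }
  rewrite E, ln_mult in H by (auto; apply INR_fact_lt_0).
  assert (0 < / (6 * INR N)) by (apply Rinv_0_lt_compat; lra). lra.
Qed.

Lemma ln_fact_lo2 (k : nat) : (1 <= k)%nat -> INR k * ln (INR k) - INR k <= ln (INR (fact k)).
Proof.
  intros Hk. assert (H := ln_robbins k Hk).
  assert (H0 : 1 <= INR k) by (apply (le_INR 1); lia).
  assert (0 <= ln (INR k)) by (rewrite <- ln_1; apply ln_le; lra).
  assert (0 < / (6 * INR k)) by (apply Rinv_0_lt_compat; lra). lra.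
Qed.

Lemma lnR_bound (m k N : nat) : (1 <= k)%nat -> (1 <= m)%nat -> (1 <= N)%nat -> (m <= N * k)%nat ->
  ln (INR (fact m)) + INR (N * k) * ln (INR N) - INR k * ln (INR (fact (N-1)))
    - INR m * ln (INR N) - INR m * ln (INR k)
  <= 1 + ln (INR m) + (INR N * INR k - INR m)^2 / (INR N * INR k) + INR k / 2 * ln (INR N) - 11/12 * INR k.
Proof.
  intros Hk Hm HN Hmk.
  assert (Hk0 : 0 < INR k) by (apply lt_0_INR; lia).
  assert (Hm0 : 0 < INR m) by (apply lt_0_INR; lia).
  assert (HN0 : 0 < INR N) by (apply lt_0_INR; lia).
  assert (A := ln_fact_up m Hm).
  assert (B := ln_fact_lo N HN).
  assert (C : ln (INR m) - ln (INR N) - ln (INR k) <= INR m / (INR N * INR k) - 1).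
  { assert (E : ln (INR m) - ln (INR N) - ln (INR k) = ln (INR m / (INR N * INR k))).
    { unfold Rdiv. rewrite ln_mult, ln_Rinv, ln_mult; try lra; try apply Rmult_lt_0_compat; try apply Rinv_0_lt_compat; try apply Rmult_lt_0_compat; auto. }
    rewrite E. apply ln_le_xm1. apply Rdiv_lt_0_compat; auto. apply Rmult_lt_0_compat; auto. }
  rewrite mult_INR.
  assert (Cm : INR m * (ln (INR m) - ln (INR N) - ln (INR k)) <= INR m * (INR m / (INR N * INR k) - 1))
    by (apply Rmult_le_compat_l; lra).
  assert (E2 : (INR N * INR k - INR m)^2 / (INR N * INR k) = INR m * (INR m / (INR N * INR k)) - 2 * INR m + INR N * INR k)
    by (field; lra).
  rewrite E2.
  assert (Bk : INR k * (11/6 + (2 * INR N - 1) * ln (INR N) - 2 * INR N) <= INR k * (2 * ln (INR (fact (N-1)))))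
    by (apply Rmult_le_compat_l; lra).
  nra.
Qed.
Lemma ln_le' (a b : R) : 0 < a -> a <= b -> ln a <= ln b.
Proof. intros Ha Hab. destruct (Rle_lt_or_eq_dec _ _ Hab) as [H|H]. apply Rlt_le, ln_increasing; auto. rewrite H; lra. Qed.

Lemma C_shift (m k : nat) : (1 <= k)%nat -> (k <= m)%nat ->
  Binomial.C (m-1) (k-1) <= Binomial.C m k.
Proof.
  intros Hk Hkm. destruct m as [|m']; [lia|]. destruct k as [|k']; [lia|].
  replace (S m' - 1)%nat with m' by lia. replace (S k' - 1)%nat with k' by lia.
  unfold Binomial.C. replace (S m' - S k')%nat with (m' - k')%nat by lia.
  rewrite !fact_S_R.
  assert (H1 := INR_fact_lt_0 m'). assert (H2 := INR_fact_lt_0 k'). assert (H3 := INR_fact_lt_0 (m'-k')).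
  assert (Hs : INR (S k') <= INR (S m')) by (apply le_INR; lia).
  assert (Hs0 : 0 < INR (S k')) by (apply lt_0_INR; lia).
  assert (E : INR (S m') * INR (fact m') / (INR (S k') * INR (fact k') * INR (fact (m' - k'))) =
    (INR (S m') / INR (S k')) * (INR (fact m') / (INR (fact k') * INR (fact (m' - k'))))) by (field; lra).
  rewrite E.
  assert (0 < INR (fact m') / (INR (fact k') * INR (fact (m' - k')))) by (apply Rdiv_lt_0_compat; nra).
  assert (1 <= INR (S m') / INR (S k')).
  { apply Rmult_le_reg_r with (INR (S k')); auto. unfold Rdiv. rewrite Rmult_assoc, Rinv_l; lra. }
  nra.
Qed.

Lemma fact_le_pow (m k : nat) : (k <= m)%nat -> INR (fact m) <= INR m ^ k * INR (fact (m - k)).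
Proof.
  intros Hkm. induction k.
  - simpl. rewrite Nat.sub_0_r. lra.
  - specialize (IHk ltac:(lia)).
    assert (E : (fact (m - k) = (m - k) * fact (m - S k))%nat).
    { replace (m - k)%nat with (S (m - S k)) by lia. simpl. lia. }
    rewrite E, mult_INR in IHk.
    assert (INR (m - k) <= INR m) by (apply le_INR; lia).
    assert (0 <= INR (fact (m - S k))) by apply pos_INR.
    assert (0 <= INR m ^ k) by (apply pow_le, pos_INR).
    assert (0 <= INR m ^ k * INR (fact (m - S k)) * (INR m - INR (m-k))) by
      (apply Rmult_le_pos; [apply Rmult_le_pos|]; lra).
    simpl. nra.
Qed.

Lemma C_le_pow (m k : nat) : (k <= m)%nat -> Binomial.C m k * INR (fact k) <= INR m ^ k.
Proof.
  intros Hkm. unfold Binomial.C. assert (H := fact_le_pow m k Hkm).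
  assert (H1 := INR_fact_lt_0 k). assert (H2 := INR_fact_lt_0 (m-k)).
  replace (INR (fact m) / (INR (fact k) * INR (fact (m - k))) * INR (fact k)) with
    (INR (fact m) / INR (fact (m - k))) by (field; lra).
  apply Rmult_le_reg_r with (INR (fact (m-k))); auto. unfold Rdiv. rewrite Rmult_assoc, Rinv_l; lra.
Qed.

Lemma lnC1 (m k : nat) : (1 <= k)%nat -> (k <= m)%nat ->
  ln (Binomial.C (m-1) (k-1)) <= INR m * ln 2.
Proof.
  intros Hk Hkm. assert (B := binom_bound (m-1) (k-1) (1/2) ltac:(lra) ltac:(lia)).
  assert (Hc := C_pos (m-1) (k-1)).
  replace (1 - 1/2) with (1/2) in B by field. rewrite Rmult_assoc, <- pow_add in B.
  replace (k - 1 + (m - 1 - (k - 1)))%nat with (m-1)%nat in B by lia.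
  assert (Hp : 0 < (1/2)^(m-1)) by (apply pow_lt; lra).
  assert (B2 : Binomial.C (m-1) (k-1) <= 2 ^ (m-1)).
  { apply Rmult_le_reg_r with ((1/2)^(m-1)); auto. rewrite <- Rpow_mult_distr.
    replace (2 * (1/2)) with 1 by field. rewrite pow1. lra. }
  assert (B3 : 2 ^ (m-1) <= 2 ^ m) by (apply Rle_pow; [lra|lia]).
  rewrite <- ln_pow' by lra. apply ln_le'; auto. lra.
Qed.

Lemma lnC2 (m k : nat) : (1 <= k)%nat -> (k <= m)%nat ->
  ln (Binomial.C (m-1) (k-1)) <= INR m * ln (3/2) + INR k * ln 2.
Proof.
  intros Hk Hkm. assert (B := binom_bound m k (1/3) ltac:(lra) Hkm).
  assert (Hc := C_pos m k). assert (Hc' := C_pos (m-1) (k-1)).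
  assert (S := C_shift m k Hk Hkm).
  assert (E : (3/2)^m * 2^k = 3^k * (3/2)^(m-k)).
  { replace m with (k + (m - k))%nat at 1 by lia. rewrite pow_add.
    replace (3^k) with ((3/2)^k * 2^k) by (rewrite <- Rpow_mult_distr; f_equal; field). ring. }
  assert (B2 : Binomial.C m k <= (3/2)^m * 2^k).
  { rewrite E. replace (1 - 1/3) with (/ (3/2)) in B by field.
    replace (1/3) with (/3) in B by field.
    rewrite <- !Rinv_pow in B by lra.
    assert (0 < 3^k) by (apply pow_lt; lra). assert (0 < (3/2)^(m-k)) by (apply pow_lt; lra).
    apply Rmult_le_reg_r with (/ 3 ^ k * / (3 / 2) ^ (m - k)).
    apply Rmult_lt_0_compat; apply Rinv_0_lt_compat; auto.
    replace (3 ^ k * (3 / 2) ^ (m - k) * (/ 3 ^ k * / (3 / 2) ^ (m - k))) with 1 by (field; lra).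
    rewrite <- Rmult_assoc. lra. }
  rewrite <- !ln_pow' by lra. rewrite <- ln_mult by (apply pow_lt; lra).
  assert (0 < (3/2)^m * 2^k) by (apply Rmult_lt_0_compat; apply pow_lt; lra).
  apply ln_le'; auto. lra.
Qed.

Lemma lnC3 (m k : nat) : (1 <= k)%nat -> (k <= m)%nat ->
  ln (Binomial.C (m-1) (k-1)) <= INR k * ln (INR m) - ln (INR (fact k)).
Proof.
  intros Hk Hkm. assert (B := C_le_pow m k Hkm).
  assert (S := C_shift m k Hk Hkm).
  assert (Hc' := C_pos (m-1) (k-1)).
  assert (Hf := INR_fact_lt_0 k).
  assert (Hm : 0 < INR m) by (apply lt_0_INR; lia).
  assert (B2 : Binomial.C (m-1) (k-1) * INR (fact k) <= INR m ^ k) by nra.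
  rewrite <- ln_pow' by auto.
  assert (L : ln (Binomial.C (m-1) (k-1) * INR (fact k)) <= ln (INR m ^ k)).
  { destruct (Rle_lt_or_eq_dec _ _ B2) as [H|H]. apply Rlt_le, ln_increasing; auto. nra. rewrite H; lra. }
  rewrite ln_mult in L by auto. lra.
Qed.
Definition Kc : R := ln 2000 + exp (3 + ln 1000) / 2.

Lemma ln_div' (x y : R) : 0 < x -> 0 < y -> ln (x / y) = ln x - ln y.
Proof. intros. unfold Rdiv. rewrite ln_mult, ln_Rinv; auto. apply Rinv_0_lt_compat; auto. Qed.

Lemma ln_m_bound (m : R) : 0 < m -> 1 + ln m <= m / 2000 + ln 2000.
Proof.
  intros Hm. assert (H := ln_le_xm1 (m / 2000) ltac:(lra)).
  rewrite ln_div' in H by lra. lra.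
Qed.

Lemma ln_lb_inv (z : R) : 0 < z -> 1 - / z <= ln z.
Proof.
  intros Hz. assert (H := ln_le_xm1 (/ z) ltac:(apply Rinv_0_lt_compat; lra)).
  rewrite ln_Rinv in H by lra. lra.
Qed.

Lemma regime2_aux (m k : R) : 1 <= k -> 0 < m ->
  k / 2 * (5 + ln m - 3 * ln k) <= m / 2000 + exp (3 + ln 1000) / 2.
Proof.
  intros Hk Hm. assert (Hl1000 := exp_ln 1000 ltac:(lra)).
  set (c := exp (3 + ln 1000)).
  assert (Hc : 0 < c) by apply exp_pos.
  assert (Hlc : ln c = 3 + ln 1000) by (unfold c; apply ln_exp).
  assert (Hk2 : 0 < 1000 * k ^ 2) by (apply Rmult_lt_0_compat; [lra|apply pow_lt; lra]).
  assert (S1 : ln m <= ln 1000 + 2 * ln k + m / (1000 * k ^ 2) - 1).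
  { assert (H := ln_le_xm1 (m / (1000 * k^2)) ltac:(apply Rdiv_lt_0_compat; lra)).
    rewrite ln_div', ln_mult, ln_pow' in H by (try apply pow_lt; lra). simpl INR in H. lra. }
  assert (S2 : ln c + 1 - c / k <= ln k).
  { assert (H := ln_lb_inv (k / c) ltac:(apply Rdiv_lt_0_compat; lra)).
    rewrite ln_div' in H by lra. replace (/ (k / c)) with (c / k) in H by (field; lra). lra. }
  assert (E1 : k / 2 * (m / (1000 * k^2)) = m / (2000 * k)) by (field; lra).
  assert (E2 : k / 2 * (c / k) = c / 2) by (field; lra).
  assert (E3 : m / (2000 * k) <= m / 2000).
  { unfold Rdiv. apply Rmult_le_compat_l. lra. apply Rinv_le_contravar; lra. }
  assert (A1 : k / 2 * ln m <= k / 2 * (ln 1000 + 2 * ln k + m / (1000 * k ^ 2) - 1))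
    by (apply Rmult_le_compat_l; lra).
  assert (A2 : k / 2 * (ln c + 1 - c / k) <= k / 2 * ln k) by (apply Rmult_le_compat_l; lra).
  rewrite Hlc in A2. fold c. nra.
Qed.
Lemma kpart (m k : nat) : (2 <= k)%nat -> (k <= m)%nat ->
  Binomial.C (m-1) (k-1) * (INR (fact m) / Gamma (INR m / INR k) ^ k) / INR k ^ m
   <= exp Kc * exp (INR m / 1000) * Rmin (INR m ^ k) (2 ^ m).
Proof.
  intros Hk Hkm.
  assert (Hk1 : (1 <= k)%nat) by lia.
  assert (Hm1 : (1 <= m)%nat) by lia.
  destruct (Gamma_pow_lb m k Hk1 Hkm) as [HG HGl].
  destruct (N_facts m k Hk1 Hkm) as [HN [H1 H2]].
  set (N := ((m + k - 1) / k)%nat) in *.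
  set (G := Gamma (INR m / INR k)) in *.
  assert (Hk0 : 1 <= INR k) by (apply (le_INR 1); lia).
  assert (Hk2 : 2 <= INR k) by (apply (le_INR 2); lia).
  assert (Hm0 : 1 <= INR m) by (apply (le_INR 1); lia).
  assert (HN0 : 1 <= INR N) by (apply (le_INR 1); lia).
  assert (Hkm' : INR k <= INR m) by (apply le_INR; lia).
  assert (H2' : INR m <= INR N * INR k) by (rewrite <- mult_INR; apply le_INR; lia).
  assert (H1' : (INR N - 1) * INR k < INR m).
  { assert (INR ((N-1)*k) < INR m) by (apply lt_INR; lia). rewrite mult_INR, minus_INR in H by lia.
    simpl in H. lra. }
  assert (HC := C_pos (m-1) (k-1)).
  assert (Hf := INR_fact_lt_0 m).
  assert (HGk : 0 < G ^ k) by (apply pow_lt; auto).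
  assert (Hkm0 : 0 < INR k ^ m) by (apply pow_lt; lra).
  set (Y := Binomial.C (m-1) (k-1) * (INR (fact m) / G ^ k) / INR k ^ m).
  assert (HY : 0 < Y).
  { unfold Y. apply Rdiv_lt_0_compat; auto. apply Rmult_lt_0_compat; auto. apply Rdiv_lt_0_compat; auto. }
  assert (lnY : ln Y = ln (Binomial.C (m-1) (k-1)) + ln (INR (fact m)) - INR k * ln G - INR m * ln (INR k)).
  { unfold Y. rewrite ln_div', ln_mult, ln_div', !ln_pow'; try lra; auto. all: try (apply Rdiv_lt_0_compat; auto). all: try (apply Rmult_lt_0_compat; auto). all: try (apply Rdiv_lt_0_compat; auto). }
  assert (LR := lnR_bound m k N Hk1 Hm1 HN H2).
  rewrite mult_INR in LR, HGl.
  set (D := (INR N * INR k - INR m) ^ 2 / (INR N * INR k)) in *.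
  assert (HD : D <= INR k / INR N).
  { unfold D. apply Rmult_le_reg_r with (INR N * INR k). nra.
    replace ((INR N * INR k - INR m) ^ 2 / (INR N * INR k) * (INR N * INR k)) with ((INR N * INR k - INR m) ^ 2) by (field; nra).
    replace (INR k / INR N * (INR N * INR k)) with (INR k * INR k) by (field; lra).
    nra. }
  assert (HD0 : 0 <= D) by (unfold D; apply Rdiv_le_0_compat; [apply pow2_ge_0 | nra]).
  assert (Main : ln Y <= ln (Binomial.C (m-1) (k-1)) + 1 + ln (INR m) + D + INR k / 2 * ln (INR N) - 11/12 * INR k).
  { rewrite lnY. lra. }
  assert (Hlm := ln_m_bound (INR m) ltac:(lra)).
  assert (HKc : ln 2000 <= Kc) by (unfold Kc; assert (0 < exp (3 + ln 1000)) by apply exp_pos; lra).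
  assert (Hl2 := ln2_ub).
  assert (Hl2p : 0 < ln 2) by (rewrite <- ln_1; apply ln_increasing; lra).
  assert (HlN : 0 <= ln (INR N)) by (rewrite <- ln_1; apply ln_le'; lra).
  apply Rmin_case.
  -
    apply le_of_ln; auto. apply Rmult_lt_0_compat. apply Rmult_lt_0_compat; apply exp_pos. apply pow_lt; lra.
    rewrite !ln_mult, !ln_exp, ln_pow' by (try apply Rmult_lt_0_compat; try apply exp_pos; try apply pow_lt; lra).
    assert (C3 := lnC3 m k Hk1 Hkm).
    assert (F := ln_fact_lo2 k Hk1).
    assert (HNle : INR N <= 2 * INR m / INR k).
    { apply Rmult_le_reg_r with (INR k). lra. replace (2 * INR m / INR k * INR k) with (2 * INR m) by (field; lra).
      assert (INR (N * k) <= INR (m + k - 1)).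
      { apply le_INR. assert (Hd := Nat.div_mod_eq (m + k - 1) k). fold N in Hd. lia. }
      rewrite mult_INR, minus_INR, plus_INR in H by lia. simpl in H. lra. }
    assert (LN : ln (INR N) <= ln 2 + ln (INR m) - ln (INR k)).
    { rewrite <- ln_mult, <- ln_div' by lra. apply ln_le'; lra. }
    assert (HDk : D <= INR k).
    { eapply Rle_trans; [exact HD|]. apply Rmult_le_reg_r with (INR N). lra.
      replace (INR k / INR N * INR N) with (INR k) by (field; lra). nra. }
    assert (A := regime2_aux (INR m) (INR k) Hk0 ltac:(lra)).
    assert (B : INR k / 2 * ln (INR N) <= INR k / 2 * (ln 2 + ln (INR m) - ln (INR k)))
      by (apply Rmult_le_compat_l; lra).
    unfold Kc. nra.
  -
    apply le_of_ln; auto. apply Rmult_lt_0_compat. apply Rmult_lt_0_compat; apply exp_pos. apply pow_lt; lra.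
    rewrite !ln_mult, !ln_exp, ln_pow' by (try apply Rmult_lt_0_compat; try apply exp_pos; try apply pow_lt; lra).
    assert (C1 := lnC1 m k Hk1 Hkm).
    assert (Hm1000 : 0 <= INR m / 1000) by lra.
    cut (ln (Binomial.C (m-1) (k-1)) + D + INR k / 2 * ln (INR N) - 11/12 * INR k <= INR m * ln 2).
    { intros; simpl INR; lra. }
    destruct (Nat.eq_dec N 1) as [E1|E1].
    + rewrite E1 in *. simpl INR in *. rewrite ln_1.
      assert (D = 0) by (unfold D; rewrite E1; simpl INR; replace (1 * INR k - INR m) with 0 by lra; unfold Rdiv; ring).
      nra.
    + destruct (Nat.eq_dec N 2) as [E2|E2].
      * rewrite E2 in *. simpl INR in *. 
        assert (D <= INR k / 2) by (replace (1+1) with 2 in HD by ring; lra).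
        assert (ln (1+1) = ln 2) by (f_equal; ring).
        nra.
      * destruct (Nat.eq_dec N 3) as [E3|E3].
        -- rewrite E3 in *. simpl INR in *.
           assert (D <= INR k / 3) by (replace (1+1+1) with 3 in HD by ring; lra).
           assert (L3 : ln (1+1+1) <= 0.6935 + 5/12).
           { replace (1+1+1) with (2 * (3/2)) by field. rewrite ln_mult by lra.
             assert (H32 := ln_ub_ge1 (3/2) ltac:(lra)). replace ((3/2 - /(3/2))/2) with (5/12) in H32 by field. lra. }
           nra.
        -- assert (HN4 : 4 <= INR N) by (replace 4 with (INR 4) by (simpl; ring); apply le_INR; lia).
           assert (C2 := lnC2 m k Hk1 Hkm).
           assert (L43 : 0.287 <= ln 2 - ln (3/2)).
           { rewrite <- ln_div' by lra. replace (2 / (3/2)) with (1 + 1/3) by field.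
             eapply Rle_trans; [|apply ln_lb4; lra]. lra. }
           assert (LN : ln (INR N) <= 2 * ln 2 + INR N / 4 - 1).
           { assert (H := ln_le_xm1 (INR N / 4) ltac:(lra)). rewrite ln_div' in H by lra.
             replace 4 with (2*2) in H at 1 by ring. rewrite ln_mult in H by lra. lra. }
           assert (HD4 : D <= INR k / 4).
           { eapply Rle_trans; [exact HD|]. unfold Rdiv. apply Rmult_le_compat_l. lra. apply Rinv_le_contravar; lra. }
           assert (B : INR k / 2 * ln (INR N) <= INR k / 2 * (2 * ln 2 + INR N / 4 - 1))
             by (apply Rmult_le_compat_l; lra).
           assert (B2 : INR k * (2 * 0.6935 + INR N / 8 - 5/12 - 3/4) <= INR k * ((INR N - 1) * 0.287))
             by (apply Rmult_le_compat_l; lra).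
           assert (B3 : INR k * (INR N - 1) * 0.287 <= INR m * 0.287) by nra.
           assert (B4 : INR m * 0.287 <= INR m * (ln 2 - ln (3/2))) by (apply Rmult_le_compat_l; lra).
           nra.
Qed.
Lemma pow_le_contra (q : R) (a b : nat) : 0 <= q <= 1 -> (a <= b)%nat -> q ^ b <= q ^ a.
Proof.
  intros Hq Hab. replace b with (a + (b - a))%nat by lia. rewrite pow_add.
  assert (0 <= q ^ a) by (apply pow_le; lra).
  assert (q ^ (b - a) <= 1) by (apply pow_le1; lra).
  assert (0 <= q ^ (b-a)) by (apply pow_le; lra). nra.
Qed.

Theorem lemma2 :
  exists C : R, 0 < C /\
    forall n m k r : nat,
      (2 <= k)%nat -> (k <= m)%nat -> (m <= n)%nat -> (2 <= r)%nat ->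
      Binomial.C n m * Binomial.C (m - 1) (k - 1)
        * (INR (fact m) / (Gamma (INR m / INR k)) ^ k)
        * (INR m / (INR k * INR n)) ^ (m * r)
      <= C * Rmin (INR m ^ k) (2 ^ m) * (6 / 5 / INR k ^ (r - 1)) ^ m.
Proof.
  exists (exp Kc). split. apply exp_pos.
  intros n m k r Hk Hkm Hmn Hr.
  assert (Hk0 : 2 <= INR k) by (apply (le_INR 2); lia).
  assert (Hm0 : 2 <= INR m) by (apply (le_INR 2); lia).
  assert (Hmn' : INR m <= INR n) by (apply le_INR; lia).
  set (q := / INR k).
  assert (Hq : 0 < q) by (apply Rinv_0_lt_compat; lra).
  assert (Hkq : INR k * q = 1) by (unfold q; field; lra).
  set (A := Binomial.C n m).
  set (B := Binomial.C (m - 1) (k - 1) * (INR (fact m) / Gamma (INR m / INR k) ^ k)).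
  assert (HA : 0 < A) by apply C_pos.
  assert (HB : 0 <= B).
  { destruct (Gamma_pow_lb m k ltac:(lia) Hkm) as [HG _].
    unfold B. apply Rmult_le_pos. apply Rlt_le, C_pos. apply Rdiv_le_0_compat. apply pos_INR. apply pow_lt; auto. }
  assert (E1 : INR m / (INR k * INR n) = (INR m / INR n) * q) by (unfold q; field; lra).
  rewrite E1, Rpow_mult_distr.
  assert (Hmn0 : 0 < INR m / INR n <= 1).
  { split. apply Rdiv_lt_0_compat; lra. apply Rmult_le_reg_r with (INR n). lra.
    unfold Rdiv. rewrite Rmult_assoc, Rinv_l; lra. }
  assert (P : (INR m / INR n) ^ (m * r) <= (INR m / INR n) ^ (2 * m)) by (apply pow_le_contra; [lra|nia]).
  assert (HQ : 0 < q ^ (m * r)) by (apply pow_lt; auto).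
  assert (St1 : A * B * ((INR m / INR n) ^ (m * r) * q ^ (m * r)) <=
                (A * (INR m / INR n) ^ (2 * m)) * (B / INR k ^ m) * (INR k ^ m * q ^ (m * r))).
  { assert (0 < INR k ^ m) by (apply pow_lt; lra).
    replace ((A * (INR m / INR n) ^ (2 * m)) * (B / INR k ^ m) * (INR k ^ m * q ^ (m * r))) with
      (A * B * ((INR m / INR n) ^ (2 * m) * q ^ (m * r))) by (field; lra).
    apply Rmult_le_compat_l. nra. apply Rmult_le_compat_r; lra. }
  replace (A * B * ((INR m / INR n) ^ (m * r) * q ^ (m * r))) with
    (Binomial.C n m * Binomial.C (m - 1) (k - 1) * (INR (fact m) / Gamma (INR m / INR k) ^ k) *
      ((INR m / INR n) ^ (m * r) * q ^ (m * r))) in St1 by (unfold A, B; ring).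
  eapply Rle_trans; [exact St1|].
  assert (X := npart n m ltac:(lia) Hmn).
  assert (Y := kpart m k Hk Hkm).
  replace (Binomial.C (m - 1) (k - 1) * (INR (fact m) / Gamma (INR m / INR k) ^ k) / INR k ^ m)
    with (B / INR k ^ m) in Y by (unfold B; reflexivity).
  assert (EQ : INR k ^ m * q ^ (m * r) = q ^ ((r - 1) * m)).
  { replace (m * r)%nat with (m + (r - 1) * m)%nat by nia. rewrite pow_add, <- Rmult_assoc, <- Rpow_mult_distr.
    rewrite Hkq, pow1. ring. }
  rewrite EQ.
  assert (ER : (6 / 5 / INR k ^ (r - 1)) ^ m = (6/5) ^ m * q ^ ((r - 1) * m)).
  { replace (6/5 / INR k ^ (r-1)) with (6/5 * q ^ (r-1)).
    rewrite Rpow_mult_distr, <- pow_mult. reflexivity.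
    unfold q. rewrite <- Rinv_pow by lra. field. apply pow_nonzero; lra. }
  rewrite ER.
  assert (Hexp : exp (0.181 * INR m) * exp (INR m / 1000) <= (6/5) ^ m).
  { rewrite <- exp_plus, (pow_exp_ln (6/5) m) by lra. apply exp_mono.
    assert (L := ln12_lb).
    assert (INR m * 0.182 <= INR m * ln (6/5)) by (apply Rmult_le_compat_l; lra). lra. }
  assert (HQ' : 0 < q ^ ((r - 1) * m)) by (apply pow_lt; auto).
  assert (Hmin : 0 <= Rmin (INR m ^ k) (2 ^ m)).
  { apply Rmin_glb; apply pow_le; lra. }
  assert (X0 : 0 <= A * (INR m / INR n) ^ (2 * m)) by (apply Rmult_le_pos; [lra| apply pow_le; lra]).
  assert (Y0 : 0 <= B / INR k ^ m) by (apply Rdiv_le_0_compat; auto; apply pow_lt; lra).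
  assert (XY : A * (INR m / INR n) ^ (2 * m) * (B / INR k ^ m) <=
     exp (0.181 * INR m) * (exp Kc * exp (INR m / 1000) * Rmin (INR m ^ k) (2 ^ m))).
  { apply Rmult_le_compat; auto. }
  assert (Z : exp (0.181 * INR m) * (exp Kc * exp (INR m / 1000) * Rmin (INR m ^ k) (2 ^ m)) <=
     exp Kc * Rmin (INR m ^ k) (2 ^ m) * (6/5)^m).
  { replace (exp (0.181 * INR m) * (exp Kc * exp (INR m / 1000) * Rmin (INR m ^ k) (2 ^ m))) with
      (exp Kc * Rmin (INR m ^ k) (2 ^ m) * (exp (0.181 * INR m) * exp (INR m / 1000))) by ring.
    apply Rmult_le_compat_l; auto. apply Rmult_le_pos; auto. apply Rlt_le, exp_pos. }
  replace (exp Kc * Rmin (INR m ^ k) (2 ^ m) * ((6 / 5) ^ m * q ^ ((r - 1) * m))) with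
    (exp Kc * Rmin (INR m ^ k) (2 ^ m) * (6 / 5) ^ m * q ^ ((r - 1) * m)) by ring.
  apply Rmult_le_compat_r; lra.
Qed.
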